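(* Let $n\ge 2$ and $T=n$, and consider the following VOM instance: $J=\{1,\dots,n\}$; each $j\in J$ has exactly $n$ neighbors, and the neighborhoods $\mathcal N_j$ are pairwise disjoint except that they all contain one common offline agent $i^*$ (so $|I|=n(n-1)+1$, $i^*$ is adjacent to all of $J$, and every $i\ne i^*$ has exactly one neighbor). Weights: $w_{i^*}=1$ and $w_i=n^{-3}$ for $i\ne i^*$. For $n$ sufficiently large, the vector $x_{ij}=1/n$ for all $(i,j)\in E$ is an optimal solution of LP-VOM with value $1+n^{-2}-n^{-3}$, and SAMP-B run with this $x$ achieves expected total weight $\sum_i w_i\mathbb E[Z_i]$ at most $\big(1-1/e+O(\ln n/n)\big)$ times the LP-VOM optimum. In particular SAMP-B cannot achieve a competitive ratio exceeding $1-1/e$ for VOM.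
   Context: Model. An instance consists of a finite bipartite graph $(I,J,E)$, where $I$ is the set of offline agents and $J$ the set of online agent types, with $|J|=T$, together with weights $w_i\ge 0$. For $i\in I$ let $\mathcal N_i=\{j\in J:(i,j)\in E\}$ and for $j\in J$ let $\mathcal N_j=\{i\in I:(i,j)\in E\}$; write $i\sim j$ (equivalently $j\sim i$) when $(i,j)\in E$. There are $T$ rounds $t=1,\dots,T$; in each round exactly one online agent arrives, whose type is drawn uniformly at random from $J$ (each type with probability $1/T$), independently across rounds. Each offline agent can be matched at most once. When an online agent of type $j$ arrives, an online algorithm must immediately and irrevocably either reject it or match it to a currently unmatched $i\in\mathcal N_j$. Let $Z_i$ be the indicator that offline agent $i$ is matched by the end. VOM maximizes $\sum_{i\in I}w_i\mathbb E[Z_i]$. Benchmark LP. Fix an integer constant $K\ge 1$ independent of $T$. Variables $x_{ij}\ge 0$ for $(i,j)\in E$, with constraints (C1) $\sum_{i\sim j}x_{ij}\le 1$ for all $j\in J$; (C2) $\sum_{j\sim i}x_{ij}\le 1$ for all $i\in I$; (C3) $\sum_{j\in S}x_{ij}\le 1-e^{-|S|}$ for all $i\in I$ and all $S\subseteq\mathcal N_i$ with $|S|\le K$. LP-VOM maximizes $\sum_{i\in I}w_i\sum_{j\sim i}x_{ij}$ subject to (C1)–(C3). SAMP-B (sampling with boosting), given a nonnegative vector $x=(x_{ij})_{(i,j)\in E}$: in each round $t$, when an online agent of type $j$ arrives, let $\mathcal N_{j,t}$ be the set of neighbors of $j$ that are unmatched at the beginning of round $t$; if $\mathcal N_{j,t}=\emptyset$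 (or $\sum_{i'\in\mathcal N_{j,t}}x_{i'j}=0$) reject; otherwise match $j$ to $i\in\mathcal N_{j,t}$ chosen with probability $x_{ij}/\sum_{i'\in\mathcal N_{j,t}}x_{i'j}$. *)

(* Defs.v *)
From HB Require Import structures.
From mathcomp Require Import all_boot all_order all_algebra.
From mathcomp Require Import reals sequences exp.
Set Implicit Arguments. Unset Strict Implicit. Unset Printing Implicit Defensive.
Import Order.TTheory GRing.Theory Num.Theory.
Local Open Scope ring_scope.

Section VOM.
Variables (R : realType) (I J : finType) (E : I -> J -> bool) (w : I -> R).

(* LP-VOM with parameter K; x is only meaningful on edges. *)
Definition lp_obj (x : I -> J -> R) : R :=
  \sum_(i : I) w i * \sum_(j : J | E i j) x i j.

Definition lp_feasible (K : nat) (x : I -> J -> R) : Prop :=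
  (forall i j, E i j -> 0 <= x i j) /\
  (forall j : J, \sum_(i : I | E i j) x i j <= 1) /\
  (forall i : I, \sum_(j : J | E i j) x i j <= 1) /\
  (forall (i : I) (S : {set J}),
                (forall j, j \in S -> E i j) -> (#|S| <= K)%N ->
                \sum_(j in S) x i j <= 1 - expR (- (#|S|%:R))).

Definition lp_optimal (K : nat) (x : I -> J -> R) : Prop :=
  lp_feasible K x /\ forall y, lp_feasible K y -> lp_obj y <= lp_obj x.

(* SAMP-B: exact expected final weight, computed by the Markov chain on the
   set M of matched offline agents. [sampb_val x r M] = expected value of
   sum_{i matched at the end} w_i when r rounds remain and M is matched. Each
   round the type j is uniform on J (prob 1/#|J|); if the unmatched neighbors
   of j carry total x-mass 0 (in particular if there are none) j is rejected,
   otherwise i is chosen w.p. x_ij / sum. *)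
Fixpoint sampb_val (x : I -> J -> R) (r : nat) (M : {set I}) : R :=
  match r with
  | 0 => \sum_(i in M) w i
  | r'.+1 =>
      (#|J|%:R)^-1 * \sum_(j : J)
        (let s := \sum_(i : I | E i j && (i \notin M)) x i j in
         if s == 0 then sampb_val x r' M
         else \sum_(i : I | E i j && (i \notin M)) (x i j / s) * sampb_val x r' (i |: M))
  end.

Definition sampb_value (x : I -> J -> R) : R := sampb_val x #|J| set0.

End VOM.

(* Offline agents: None = i*, Some (j, k) = the k-th private neighbor of j
   (k < n-1). Online types: 'I_n. So |I| = n(n-1)+1. *)
Definition inst_I (n : nat) : finType := option ('I_n * 'I_n.-1)%type.
Definition inst_J (n : nat) : finType := 'I_n.

Definition inst_E (n : nat) (i : inst_I n) (j : inst_J n) : bool :=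
  match i with
  | None => true
  | Some (j', _) => j' == j
  end.

Definition inst_w (R : realType) (n : nat) (i : inst_I n) : R :=
  match i with
  | None => 1
  | Some _ => (n%:R ^+ 3)^-1
  end.

Definition inst_x (R : realType) (n : nat) (i : inst_I n) (j : inst_J n) : R :=
  (n%:R)^-1.

(* Main.v *)
Require Import Defs.
From HB Require Import structures.
From mathcomp Require Import all_boot all_order all_algebra.
From mathcomp Require Import reals sequences exp.
From mathcomp Require Import ring lra zify.
Import Order.TTheory GRing.Theory Num.Theory.
Local Open Scope ring_scope.

Lemma sum_option (R : realType) (T : finType) (P : pred (option T)) (F : option T -> R) :
  \sum_(i : option T | P i) F i =
  (if P None then F None else 0) + \sum_(t : T | P (Some t)) F (Some t).
Proof.
rewrite big_mkcond (bigD1 None) //=; congr (_ + _).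
rewrite (reindex_omap Some (fun o => o)) /=; last by case.
rewrite [RHS]big_mkcond; apply: eq_big => // t; by rewrite eqxx.
Qed.

Lemma sum_nbr (R : realType) n (P : pred (inst_I n)) (j : inst_J n) (F : inst_I n -> R) :
  \sum_(i : inst_I n | inst_E i j && P i) F i =
  (if P None then F None else 0) + \sum_(k : 'I_n.-1 | P (Some (j,k))) F (Some (j,k)).
Proof.
rewrite sum_option /=; congr (_ + _).
rewrite (eq_big (fun p : 'I_n * 'I_n.-1 => (p.1 == j) && P (Some (p.1, p.2)))
           (fun p => F (Some (p.1, p.2)))); last 2 first.
- by case.
- by case.
rewrite -(pair_big_dep (fun j' => j' == j) (fun j' k => P (Some (j',k))) (fun j' k => F (Some (j',k)))).
by rewrite big_pred1_eq.
Qed.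

Section LP.
Variables (R : realType) (n : nat).
Hypothesis hn : (2 <= n)%N.
Let N : R := n%:R.
Let I := inst_I n.
Let J := inst_J n.

Lemma N_gt0 : 0 < N.
Proof. by rewrite /N ltr0n (leq_trans _ hn). Qed.

Lemma sum_some (t : 'I_n * 'I_n.-1) (f : J -> R) :
  \sum_(j | inst_E (Some t) j) f j = f t.1.
Proof. case: t => j0 k /=; rewrite (eq_bigl (fun j => j == j0)) ?big_pred1_eq // => j; exact: eq_sym. Qed.

Lemma sum_all (f : J -> R) : \sum_(j | inst_E None j) f j = \sum_j f j.
Proof. by []. Qed.

Lemma card_J : #|J| = n.
Proof. by rewrite card_ord. Qed.

Lemma sum_nbr_const (j : J) (c : R) : \sum_(i : I | inst_E i j) c = c * N.
Proof.
rewrite (eq_bigl (fun i => inst_E i j && predT i)); last by move=> i; rewrite andbT.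
rewrite sum_nbr /= sumr_const card_ord /N.
by rewrite -mulrS prednK ?mulr_natr // (leq_trans _ hn).
Qed.

Lemma inst_x_feasible (K : nat) : (2 * K <= n)%N ->
  lp_feasible (@inst_E n) K (@inst_x R n).
Proof.
move=> hKn; have N0 := N_gt0.
split; [|split; [|split]].
- by move=> i j _; rewrite /inst_x invr_ge0 ltW.
- move=> j; rewrite /inst_x -/N sum_nbr_const mulVf //; exact: lt0r_neq0.
- case=> [t|].
  + by rewrite /inst_x sum_some -/N invf_le1 // /N ler1n (leq_trans _ hn).
  + by rewrite /inst_x sum_all sumr_const card_ord -/N -mulr_natr mulVf // lt0r_neq0.
- move=> i S _ hS; rewrite /inst_x sumr_const -/N.
  case: (posnP #|S|) => [->|Spos]; first by rewrite mulr0n oppr0 expR0 subrr.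
  have h1 : (N^-1 *+ #|S|) <= 2^-1.
    rewrite -[N^-1 *+ _]mulr_natr ler_pdivrMl // ler_pdivlMr //.
    by rewrite -natrM ler_nat muln2 -mul2n (leq_trans _ hKn) // leq_mul2l hS orbT.
  apply: (le_trans h1).
  have : expR (- (#|S|%:R)) <= expR (-1) :> R.
    by rewrite ler_expR lerN2 ler1n.
  have : expR (-1) <= 2^-1 :> R.
    rewrite expRN lef_pV2 ?posrE ?expR_gt0 //.
    by apply: le_trans (expR_ge1Dx 1); rewrite (_ : 2 = 1 + 1 :> R).
  move=> ha hb; rewrite lerBrDr -lerBrDl; apply: le_trans hb (le_trans ha _).
  rewrite (_ : 1 - 2^-1 = 2^-1 :> R) //.
  by field.
Qed.


Lemma N_neq0 : N != 0. Proof. exact: lt0r_neq0 N_gt0. Qed.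

Lemma obj_x : lp_obj (@inst_E n) (@inst_w R n) (@inst_x R n)
  = 1 + (N ^+ 2)^-1 - (N ^+ 3)^-1.
Proof.
rewrite /lp_obj (@sum_option _ _ xpredT) sum_all /inst_x /inst_w -/N sumr_const card_ord.
under eq_bigr do rewrite sum_some.
rewrite sumr_const card_prod !card_ord -/N.
rewrite -[N^-1 *+ n]mulr_natr -[_ *+ (n * n.-1)]mulr_natr natrM mul1r.
have -> : (n.-1)%:R = N - 1 :> R.
  by rewrite /N -{2}(prednK (leq_trans _ hn)) // -natr1 addrK.
rewrite -/N; have := N_neq0; move=> hN0.
by field.
Qed.
Lemma obj_le (y : I -> J -> R) (K : nat) : lp_feasible (@inst_E n) K y ->
  lp_obj (@inst_E n) (@inst_w R n) y <= 1 + (N ^+ 2)^-1 - (N ^+ 3)^-1.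
Proof.
move=> [y0 [C1 [C2 _]]].
set Y := fun i : I => \sum_(j | inst_E i j) y i j.
have hsum : \sum_(i : I) Y i <= N.
  rewrite /Y (exchange_big_dep xpredT) //=.
  apply: le_trans (ler_sum _ (fun j _ => C1 j)) _.
  by rewrite sumr_const card_ord.
have hY0 : Y None <= 1 by exact: C2.
have hsplit : \sum_(i : I) Y i = Y None + \sum_(t : 'I_n * 'I_n.-1) Y (Some t).
  by rewrite (@sum_option _ _ xpredT).
rewrite /lp_obj (@sum_option _ _ xpredT) /inst_w mul1r -/N.
have -> : \sum_(j | inst_E None j) y None j +
  \sum_t (N ^+ 3)^-1 * \sum_(j | inst_E (Some t) j) y (Some t) j
  = Y None + (N ^+ 3)^-1 * (\sum_(i : I) Y i - Y None).
  by rewrite hsplit addrAC subrr add0r mulr_sumr.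
have hN3 : 0 < (N ^+ 3)^-1 by rewrite invr_gt0 exprn_gt0 // N_gt0.
have hN1 : 1 <= N by rewrite /N ler1n (leq_trans _ hn).
have hN3le : (N ^+ 3)^-1 <= 1.
  by rewrite invf_le1 ?exprn_gt0 ?N_gt0 // exprn_ege1.
have e2 : (N ^+ 2)^-1 = (N ^+ 3)^-1 * N.
  by have := N_neq0; move=> h; field.
rewrite e2.
have h1 := ler_wpM2l (ltW hN3) hsum.
have h2 : (1 - (N ^+ 3)^-1) * Y None <= (1 - (N ^+ 3)^-1) * 1.
  by rewrite ler_wpM2l // subr_ge0.
lra.
Qed.

End LP.

Lemma key (R : realType) (dd X q Q b : R) : 0 <= dd -> 0 <= q -> q <= 1 -> 1 - X <= Q ->
  0 <= Q -> 0 <= b -> (q * (1 + dd) <= dd \/ 1 <= b) ->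
  (1 + dd * Num.min 1 X) / (1 + dd) <= 1 - q * (1 - X) + Q * b.
Proof.
move=> hd hq0 hq1 hX hQ hb hc.
have hpos : 0 < 1 + dd by lra.
rewrite ler_pdivrMr //.
case: (leP 1 X) => hX1.
-   have : 0 <= Q * b by exact: mulr_ge0.
  have : q * (1 - X) <= 0 by rewrite mulr_ge0_le0 // subr_le0.
  nra.
-   case: hc => hc.
  + have h1 : 0 <= (1 - X) by lra.
    have : q * (1 + dd) * (1 - X) <= dd * (1 - X) by rewrite ler_wpM2r.
    have : 0 <= Q * b * (1 + dd) by rewrite !mulr_ge0 // ltW.
    nra.
  + have : Q <= Q * b by rewrite -{1}(mulr1 Q) ler_wpM2l.
    have : q * (1 - X) <= 1 - X by rewrite -{2}(mul1r (1 - X)) ler_wpM2r // subr_ge0 ltW.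
    nra.
Qed.

Lemma key1 (R : realType) (dd X : R) : 0 <= dd -> (1 + dd * Num.min 1 X) / (1 + dd) <= 1.
Proof.
move=> hd; have hpos : 0 < 1 + dd by lra.
rewrite ler_pdivrMr // mul1r lerD2l -{2}(mulr1 dd) ler_wpM2l //.
by rewrite ge_min lexx.
Qed.

Lemma sum_const_pred (R : realType) (T : finType) (P : pred T) (c : R) :
  \sum_(k | P k) c = c *+ #|[set k | P k]|.
Proof. by rewrite -sumr_const; apply: eq_bigl => k; rewrite inE. Qed.

Section SB.
Variables (R : realType) (n m : nat).
Hypothesis hn : (2 <= n)%N.
Let N : R := n%:R.
Let I := inst_I n.
Let J := inst_J n.

Definition cnt (M : {set I}) (j : J) : nat := #|[set k : 'I_n.-1 | Some (j,k) \in M]|.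
Definition dnt (M : {set I}) (j : J) : nat := #|[set k : 'I_n.-1 | Some (j,k) \notin M]|.

Lemma cnt_dnt M j : (cnt M j + dnt M j)%N = n.-1.
Proof.
rewrite /cnt /dnt (_ : [set k | Some (j,k) \notin M] = ~: [set k | Some (j,k) \in M]).
  by rewrite cardsC card_ord.
by apply/setP => k; rewrite !inE.
Qed.

Lemma cnt_add (M : {set I}) (j0 : J) (k0 : 'I_n.-1) (j : J) : Some (j0,k0) \notin M ->
  cnt (Some (j0,k0) |: M) j = (cnt M j + (j == j0))%N.
Proof.
move=> hM; rewrite /cnt.
case: eqP => [->|hj].
- rewrite (_ : [set k | Some (j0,k) \in Some (j0,k0) |: M] = k0 |: [set k | Some (j0,k) \in M]).
    by rewrite cardsU1 inE hM addnC.
  apply/setP => k; rewrite !inE.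
  by congr (_ || _); apply/eqP/eqP => [[]|->].
- rewrite addn0; apply: eq_card => k; rewrite !inE.
  by rewrite (_ : (Some (j,k) == Some (j0,k0)) = false) //; apply/eqP => -[].
Qed.

Definition Sp (M : {set I}) : R := \sum_(j : J) (2:R) ^+ cnt M j.

Lemma Sp_add (M : {set I}) (j0 : J) (k0 : 'I_n.-1) : Some (j0,k0) \notin M ->
  Sp (Some (j0,k0) |: M) = Sp M + 2 ^+ cnt M j0.
Proof.
move=> hM; rewrite /Sp.
rewrite (eq_bigr (fun j => 2 ^+ cnt M j + (if j == j0 then 2 ^+ cnt M j else 0))).
  by rewrite big_split /= -big_mkcond big_pred1_eq.
move=> j _; rewrite cnt_add //; case: eqP => _ /=.
  by rewrite addn1 exprS mulr2n mulrDl mul1r.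
by rewrite addn0 addr0.
Qed.

Lemma Sp_ge0 M : 0 <= Sp M.
Proof. by apply: sumr_ge0 => j _; rewrite exprn_ge0. Qed.

Definition Lm : nat := (n.-1 - m)%N.
Definition qq : R := Lm%:R / (Lm.+1)%:R.
Definition mu : R := 1 + N^-1.
Definition P2 : R := 2 ^+ m.+1.
Definition AA : R := (Lm.+1)%:R / (N * P2).

Definition FF (r : nat) (M : {set I}) : R := 1 - qq ^+ r + AA * mu ^+ r * Sp M.
Definition HH (r : nat) (M : {set I}) : R :=
  if None \in M then 1 else Num.min 1 (FF r M).
Definition Phi (r : nat) (M : {set I}) : R :=
  (N ^+ 3)^-1 * (#|M|%:R + r%:R) + HH r M.


Lemma N_gt0' : 0 < N.
Proof. by rewrite /N ltr0n (leq_trans _ hn). Qed.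
Lemma qq_ge0 : 0 <= qq.
Proof. by rewrite /qq divr_ge0. Qed.
Lemma qq_le1 : qq <= 1.
Proof. by rewrite /qq ler_pdivrMr ?ltr0n // mul1r ler_nat. Qed.
Lemma P2_gt0 : 0 < P2.
Proof. by rewrite /P2 exprn_gt0. Qed.
Lemma AA_ge0 : 0 <= AA.
Proof. by rewrite /AA divr_ge0 // mulr_ge0 // ltW ?N_gt0' ?P2_gt0. Qed.
Lemma mu_ge1 : 1 <= mu.
Proof. by rewrite /mu lerDl invr_ge0 ltW // N_gt0'. Qed.
Lemma mu_ge0 : 0 <= mu.
Proof. exact: le_trans ler01 mu_ge1. Qed.

Notation V := (sampb_val (@inst_E n) (@inst_w R n) (@inst_x R n)).

Lemma HH_ge0 r (M : {set I}) : 0 <= HH r M.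
Proof.
rewrite /HH; case: ifP => // _; rewrite le_min ler01 /=.
rewrite /FF; apply: addr_ge0.
  by rewrite subr_ge0 exprn_ile1 ?qq_ge0 ?qq_le1.
by apply: mulr_ge0; [apply: mulr_ge0; [exact: AA_ge0 | exact: exprn_ge0 mu_ge0] | exact: Sp_ge0].
Qed.


Lemma V0_le (M : {set I}) : V 0 M <= Phi 0 M.
Proof.
rewrite /= /Phi.
apply: (@le_trans _ _ (\sum_(i in M) ((N^+3)^-1 + (if i == None then 1 else 0)))).
  apply: ler_sum => i _; case: i => [t|] /=; rewrite /inst_w -/N ?addr0 //.
  by rewrite lerDr invr_ge0 exprn_ge0 // ltW // N_gt0'.
rewrite big_split /= sumr_const.
have -> : \sum_(i in M) (if i == None then 1 else 0 : R) = if None \in M then 1 else 0.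
  rewrite big_mkcond (@sum_option _ _ xpredT) /= big1 ?addr0; last by move=> t _; case: ifP.
  by case: ifP.
rewrite addr0 mulr_natr lerD2l.
have := HH_ge0 0 M; rewrite /HH; case: (None \in M) => //.
Qed.


Lemma N3_ge0 : 0 <= (N ^+ 3)^-1.
Proof. by rewrite invr_ge0 exprn_ge0 // ltW // N_gt0'. Qed.

Lemma Phi_mono_in r (M : {set I}) (i : I) : None \in M -> Phi r (i |: M) <= Phi r.+1 M.
Proof.
move=> hN; rewrite /Phi /HH inE hN orbT lerD2r ler_wpM2l ?N3_ge0 //.
rewrite -!natrD ler_nat cardsU1 addnS -addSn leq_add2r -add1n leq_add2r.
by case: (i \notin M).
Qed.

Lemma Phi_mono_in0 r (M : {set I}) : None \in M -> Phi r M <= Phi r.+1 M.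
Proof.
move=> hN; rewrite /Phi /HH hN lerD2r ler_wpM2l ?N3_ge0 //.
by rewrite -!natrD ler_nat addnS.
Qed.

Lemma step_in r (M : {set I}) : (forall M', V r M' <= Phi r M') -> None \in M -> V r.+1 M <= Phi r.+1 M.
Proof.
move=> IH hN /=.
rewrite card_ord.
apply: (@le_trans _ _ (N^-1 * \sum_(j : J) Phi r.+1 M)).
  apply: ler_wpM2l; first by rewrite invr_ge0 ltW // N_gt0'.
  apply: ler_sum => j _; cbv zeta.
  case: ifP => hs; first exact: le_trans (IH M) (Phi_mono_in0 _ _ hN).
  apply: (@le_trans _ _ (\sum_(i | inst_E i j && (i \notin M))
     (inst_x R i j / \sum_(i0 | inst_E i0 j && (i0 \notin M)) inst_x R i0 j) * Phi r.+1 M)).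
    apply: ler_sum => i _; apply: ler_wpM2l.
      by rewrite divr_ge0 // ?sumr_ge0 // => *; rewrite /inst_x invr_ge0 ler0n.
    exact: le_trans (IH _) (Phi_mono_in _ _ _ hN).
  by rewrite -mulr_suml -mulr_suml mulfV ?mul1r // hs.
by rewrite sumr_const card_ord -mulr_natr mulrCA mulVf ?mulr1 // lt0r_neq0 // N_gt0'.
Qed.


Definition Bn r (M : {set I}) : R := (N ^+ 3)^-1 * ((#|M|.+1)%:R + r%:R).

Lemma Phi_none r (M : {set I}) : None \notin M -> Phi r (None |: M) = Bn r M + 1.
Proof.
move=> hN; rewrite /Phi /HH /Bn !inE eqxx /= cardsU1 hN.
by rewrite add1n.
Qed.

Lemma Phi_some r (M : {set I}) (j : J) (k : 'I_n.-1) : None \notin M -> Some (j,k) \notin M ->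
  Phi r (Some (j,k) |: M) = Bn r M + Num.min 1 (FF r M + AA * mu ^+ r * 2 ^+ cnt M j).
Proof.
move=> hN hS; rewrite /Phi /HH /Bn inE (negbTE hN) /= cardsU1 hS add1n.
rewrite inE /=; congr (_ + Num.min 1 _); rewrite /FF Sp_add //; ring.
Qed.

Lemma body_out r (M : {set I}) (j : J) : (forall M', V r M' <= Phi r M') -> None \notin M ->
  let s := \sum_(i | inst_E i j && (i \notin M)) inst_x R i j in
  let body := if s == 0 then V r M else
     \sum_(i | inst_E i j && (i \notin M)) (inst_x R i j / s) * V r (i |: M) in
  body <= Bn r M + 1 /\
  body <= Bn r M + ((1 - qq + qq * FF r M) + (qq * AA * mu ^+ r + qq ^+ r / P2) * 2 ^+ cnt M j).
Proof.
move=> IH hN s body.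
have hNp := N_gt0'.
set d := dnt M j; set c := cnt M j.
have hs : s = N^-1 * (1 + d%:R).
  rewrite /s (@sum_nbr _ _ (fun i => i \notin M)) hN sum_const_pred -/(dnt M j) -/d.
  by rewrite /inst_x -/N mulrDr mulr1 mulr_natr.
have hd0 : 0 < 1 + d%:R :> R by rewrite ltr_wpDr // ler0n.
have hs0 : (s == 0) = false.
  by rewrite hs mulf_eq0 invr_eq0 (negbTE (lt0r_neq0 hNp)) (negbTE (lt0r_neq0 hd0)).
set X := FF r M + AA * mu ^+ r * 2 ^+ c.
have hb : body <= Bn r M + (1 + d%:R * Num.min 1 X) / (1 + d%:R).
  rewrite /body hs0.
  apply: (@le_trans _ _ (\sum_(i | inst_E i j && (i \notin M)) (inst_x R i j / s) * Phi r (i |: M))).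
    apply: ler_sum => i _; apply: ler_wpM2l; last exact: IH.
    by rewrite hs /inst_x divr_ge0 ?invr_ge0 ?ler0n // mulr_ge0 ?invr_ge0 ?ler0n // ltW.
  rewrite (@sum_nbr _ _ (fun i => i \notin M)) hN Phi_none //.
  rewrite (eq_bigr (fun _ => (inst_x R None j / s) * (Bn r M + Num.min 1 X))); last first.
    by move=> k hk; rewrite Phi_some.
  rewrite sum_const_pred -/(dnt M j) -/d hs /inst_x -/N -[(N^-1 / (N^-1 * (1 + d%:R)) * (Bn r M + Num.min 1 X)) *+ d]mulr_natr.
  have hN0 : N != 0 by exact: lt0r_neq0.
  have hd00 : 1 + d%:R != 0 :> R by exact: lt0r_neq0.
  rewrite le_eqVlt; apply/orP; left; apply/eqP.
  have hn0 : (n%:R : R) != 0 := hN0.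
  by field; rewrite hd00 hn0.
split.
  by apply: (le_trans hb); rewrite lerD2l key1 // ler0n.
apply: (le_trans hb); rewrite lerD2l.
have hq0 := qq_ge0; have hq1 := qq_le1.
apply: (@le_trans _ _ (1 - qq * (1 - X) + qq ^+ r * (2 ^+ c / P2))); last first.
  by rewrite le_eqVlt; apply/orP; left; apply/eqP; rewrite /X; ring.
apply: key => //.
- have hAm : 0 <= AA * mu ^+ r by apply: mulr_ge0; [exact: AA_ge0 | exact: exprn_ge0 mu_ge0].
  have h1 : 0 <= AA * mu ^+ r * Sp M by apply: mulr_ge0 => //; exact: Sp_ge0.
  have h2 : 0 <= AA * mu ^+ r * 2 ^+ c by apply: mulr_ge0 => //; exact: exprn_ge0.
  rewrite /X /FF; lra.
- exact: exprn_ge0.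
- by rewrite divr_ge0 ?exprn_ge0 // ltW // P2_gt0.
have hcd := cnt_dnt M j; rewrite -/c -/d in hcd.
case: (leqP c m) => hcm.
- left; rewrite /qq mulrAC ler_pdivrMr ?ltr0n //.
  rewrite -(natrD _ 1 d) -!natrM ler_nat /Lm; nia.
- right; rewrite ler_pdivlMr ?P2_gt0 // mul1r /P2 ler_eXn2l //.
  by rewrite (_ : 2 = 1 + 1 :> R) // ltrDl.
Qed.


Lemma final_alg r (M : {set I}) :
  N^-1 * ((Bn r M + (1 - qq + qq * FF r M)) * N + (qq * AA * mu ^+ r + qq ^+ r / P2) * Sp M)
  <= Bn r M + FF r.+1 M.
Proof.
have hNp := N_gt0'.
have hu1 : qq ^+ r <= 1 by rewrite exprn_ile1 ?qq_ge0 ?qq_le1.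
have ht1 : 1 <= mu ^+ r by rewrite exprn_ege1 ?mu_ge1.
have hS := Sp_ge0 M.
have hP := P2_gt0.
have hmu1 := mu_ge1.
have hprod : 0 <= mu ^+ r * mu - qq ^+ r.
  rewrite subr_ge0; apply: (le_trans hu1); apply: (le_trans ht1).
  by rewrite -{1}(mulr1 (mu ^+ r)) ler_wpM2l // (le_trans ler01).
rewrite -subr_ge0.
have -> : Bn r M + FF r.+1 M -
   N^-1 * ((Bn r M + (1 - qq + qq * FF r M)) * N + (qq * AA * mu ^+ r + qq ^+ r / P2) * Sp M)
   = Sp M / (N * P2) * (mu ^+ r * mu - qq ^+ r).
  rewrite /FF !exprS.
  move: (qq ^+ r) (mu ^+ r) (Sp M) (Bn r M) => u t S B.
  rewrite /qq /AA /mu.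
  have hN0 : (n%:R : R) != 0 by exact: lt0r_neq0.
  have hP0 : P2 != 0 by exact: lt0r_neq0.
  have hL0 : (Lm.+1)%:R != 0 :> R by rewrite pnatr_eq0.
  move: P2 hP0 => p hp0.
  rewrite -/N.
  field.
  by rewrite hN0 hp0 addrC natr1 hL0.
apply: mulr_ge0 => //; apply: divr_ge0 => //; apply: mulr_ge0; exact: ltW.
Qed.


Lemma step_out r (M : {set I}) : (forall M', V r M' <= Phi r M') -> None \notin M ->
  V r.+1 M <= Phi r.+1 M.
Proof.
move=> IH hN.
have hNp := N_gt0'.
have hN0 : N != 0 by exact: lt0r_neq0.
have -> : Phi r.+1 M = Bn r M + Num.min 1 (FF r.+1 M).
  rewrite /Phi /HH (negbTE hN) /Bn; congr (_ * _ + _).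
  by rewrite -!natrD addnS addSn.
rewrite /= card_ord -/N.
have hNi : 0 <= N^-1 by rewrite invr_ge0 ltW.
case: (leP 1 (FF r.+1 M)) => _.
- apply: (@le_trans _ _ (N^-1 * \sum_(j : J) (Bn r M + 1))).
    apply: ler_wpM2l => //; apply: ler_sum => j _.
    have := body_out r M j IH hN; cbv zeta => -[h1 h2]; exact: h1.
  by rewrite sumr_const card_ord -mulr_natr mulrCA mulVf ?mulr1.
- apply: (@le_trans _ _ (N^-1 * \sum_(j : J) (Bn r M +
      ((1 - qq + qq * FF r M) + (qq * AA * mu ^+ r + qq ^+ r / P2) * 2 ^+ cnt M j)))).
    apply: ler_wpM2l => //; apply: ler_sum => j _.
    have := body_out r M j IH hN; cbv zeta => -[h1 h2]; exact: h2.
  apply: le_trans (final_alg r M).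
  rewrite big_split /= big_split /= !sumr_const card_ord -mulr_sumr.
  rewrite (_ : \sum_(i < n) 2 ^+ cnt M i = Sp M) //.
  rewrite -[Bn r M *+ n]mulr_natr -[(1 - qq + qq * FF r M) *+ n]mulr_natr -/N mulrDl addrA.
  by rewrite le_eqVlt; apply/orP; left; apply/eqP; ring.
Qed.

Lemma V_le r (M : {set I}) : V r M <= Phi r M.
Proof.
elim: r M => [|r IH] M; first exact: V0_le.
case hN: (None \in M).
- exact: step_in.
- by apply: step_out; rewrite ?hN.
Qed.

End SB.

Lemma q_pow_lb (R : realType) (L n : nat) : (0 < L)%N -> (L <= n)%N ->
  1 - ((L%:R : R) / (L.+1)%:R) ^+ n <= 1 - expR (-1) + (n%:R - L%:R) / L%:R.
Proof.
move=> hL hLn.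
have Lp : 0 < (L%:R : R) by rewrite ltr0n.
set x := (L%:R : R)^-1.
have hx : 0 < x by rewrite invr_gt0.
have hq : expR (- x) <= L%:R / (L.+1)%:R.
  rewrite expRN -natr1 -[_ / _]invrK invf_div lef_pV2 ?posrE ?expR_gt0 //; last first.
    by rewrite divr_gt0 // ltr_wpDl.
  by rewrite mulrDl divff ?lt0r_neq0 // mul1r; exact: expR_ge1Dx.
have hqn : expR (- x) ^+ n <= (L%:R / (L.+1)%:R) ^+ n.
  by apply: lerXn2r; rewrite ?nnegrE ?expR_ge0 //; apply: le_trans hq; exact: expR_ge0.
rewrite -expRM_natl in hqn.
have e1 : n%:R * - x = -1 + (L%:R - n%:R) / L%:R.
  rewrite /x; field; exact: lt0r_neq0.
rewrite e1 expRD in hqn.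
have hy := expR_ge1Dx ((L%:R - n%:R) / L%:R : R).
have he0 : 0 <= expR (-1 : R) by exact: expR_ge0.
have he1 : expR (-1 : R) <= 1 by rewrite expR_le1 lerN10.
have hnn : 0 <= (n%:R - L%:R) / L%:R :> R.
  by rewrite divr_ge0 ?subr_ge0 ?ler_nat // ltW.
have hy' := ler_wpM2l he0 hy.
have hlin : (L%:R - n%:R) / L%:R = - ((n%:R - L%:R) / L%:R) :> R.
  by rewrite -mulNr opprB.
rewrite hlin in hy'.
have hp := ler_wpM2r hnn he1.
rewrite mul1r in hp.
rewrite hlin in hqn.
have -> : (n%:R - L%:R) * x = (n%:R - L%:R) / L%:R by [].
lra.
Qed.

Lemma mu_pow_ub (R : realType) (n : nat) : (0 < n)%N ->
  (1 + (n%:R : R)^-1) ^+ n <= expR 1.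
Proof.
move=> hn.
have hN : 0 < (n%:R : R) by rewrite ltr0n.
apply: (@le_trans _ _ (expR ((n%:R : R)^-1) ^+ n)).
  apply: lerXn2r; rewrite ?nnegrE ?expR_ge0 ?expR_ge1Dx //.
  by rewrite addr_ge0 // invr_ge0 ltW.
by rewrite -expRM_natl mulfV // lt0r_neq0.
Qed.

Lemma pow_lin t : (5 <= t)%N -> (4 * t.+1 <= 2 ^ t)%N.
Proof.
elim: t => // t IH; rewrite leq_eqVlt => /orP [/eqP <- //|h5].
have := IH h5; rewrite expnS; lia.
Qed.

Lemma ln_bound (R : realType) (n t : nat) : (2 <= n)%N -> (2 ^ t <= n)%N ->
  (4 * t.+1)%:R + expR 1 + 1 <= (9 + expR 1) / ln 2 * ln (n%:R : R).
Proof.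
move=> hn ht.
have l2 : 0 < ln (2 : R) by apply: ln_gt0; rewrite (_ : 2 = 1 + 1 :> R) // ltrDl.
have hN : 0 < (n%:R : R) by rewrite ltr0n (leq_trans _ hn).
have h1 : ln (2 : R) <= ln (n%:R : R).
  by rewrite ler_ln ?posrE // ler_nat.
have h2 : ln (2 : R) *+ t <= ln (n%:R : R).
  rewrite -lnXn // ler_ln ?posrE ?exprn_gt0 //.
  by rewrite -natrX ler_nat.
set l := ln (n%:R : R) / ln 2.
have hl1 : 1 <= l by rewrite /l ler_pdivlMr // mul1r.
have hlt : t%:R <= l by rewrite /l ler_pdivlMr // mulr_natl.
have he : 0 <= expR (1 : R) by exact: expR_ge0.
have -> : (9 + expR 1) / ln 2 * ln (n%:R : R) = (9 + expR 1) * l.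
  by rewrite /l mulrAC mulrA.
rewrite natrM -natr1.
have : expR 1 * 1 <= expR 1 * l by apply: ler_wpM2l.
nra.
Qed.

Lemma cnt0 n (j : inst_J n) : @cnt n set0 j = 0%N.
Proof.
rewrite /cnt; apply/eqP; rewrite cards_eq0; apply/eqP/setP => k; by rewrite !inE.
Qed.

Lemma endgame (R : realType) n : (2 <= n)%N -> (32 <= n)%N ->
  sampb_value (@inst_E n) (@inst_w R n) (@inst_x R n) <=
  (1 - expR (-1) + (9 + expR 1) / ln 2 * ln (n%:R) / n%:R)
    * lp_obj (@inst_E n) (@inst_w R n) (@inst_x R n).
Proof.
move=> hn h32.
set t := trunc_log 2 n.
have ht5 : (5 <= t)%N by apply: trunc_log_max.
have htn : (2 ^ t <= n)%N by apply: trunc_logP; lia.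
have hnt : (n < 2 ^ t.+1)%N by apply: trunc_log_ltn.
have h4 : (4 * t.+1 <= n)%N := leq_trans (@pow_lin t ht5) htn.
set m := (2 * t).+1.
have hV := @V_le R n m hn n set0.
rewrite /sampb_value card_ord; apply: (le_trans hV).
rewrite (obj_x R n hn).
have hSp : Sp R n set0 = n%:R.
  rewrite /Sp (eq_bigr (fun _ => 1)) ?sumr_const ?card_ord // => j _.
  by rewrite cnt0.
rewrite /Phi /HH inE cards0 /FF hSp /qq /AA /P2.
have hL : Lm n m = (n - 2 * t.+1)%N by rewrite /Lm /m; lia.
have hLpos : (0 < Lm n m)%N by rewrite hL; lia.
have hLn : (Lm n m <= n)%N by rewrite hL; lia.
have F1 := @q_pow_lb R _ _ hLpos hLn.
have hNp : 0 < (n%:R : R) by rewrite ltr0n (leq_trans _ hn).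
have hN0 : (n%:R : R) != 0 by exact: lt0r_neq0.
have hLp : 0 < ((Lm n m)%:R : R) by rewrite ltr0n.
have F2 : (n%:R - (Lm n m)%:R) / (Lm n m)%:R <= (4 * t.+1)%:R / (n%:R : R).
  rewrite ler_pdivrMr // mulrAC ler_pdivlMr // -natrB // -!natrM ler_nat hL.
  nia.
have hU := @mu_pow_ub R n (leq_trans _ hn).
have hU0 : 0 <= mu R n ^+ n by rewrite exprn_ge0 // (le_trans ler01) // mu_ge1.
have he : 0 <= expR (1 : R) by exact: expR_ge0.
have hPN : (n%:R : R) ^+ 2 <= 2 ^+ m.+1.
  have -> : m.+1 = (t.+1 * 2)%N by rewrite /m; lia.
  rewrite exprM; apply: lerXn2r; rewrite ?nnegrE ?exprn_ge0 ?ler0n //.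
  by rewrite -natrX ler_nat ltnW.
have hP0 : 0 < (2 : R) ^+ m.+1 by rewrite exprn_gt0.
have hL1 : ((Lm n m).+1)%:R <= (n%:R : R) by rewrite ler_nat; lia.
have F3 : (Lm n m).+1%:R / (n%:R * 2 ^+ m.+1) * mu R n ^+ n * n%:R <= expR 1 / (n%:R : R).
  have -> : (Lm n m).+1%:R / (n%:R * 2 ^+ m.+1) * mu R n ^+ n * n%:R
       = (Lm n m).+1%:R * mu R n ^+ n / 2 ^+ m.+1.
    by field; rewrite hN0 lt0r_neq0.
  rewrite ler_pdivrMr // mulrAC ler_pdivlMr //.
  have h1 : (Lm n m).+1%:R * mu R n ^+ n <= n%:R * expR 1.
    by apply: ler_pM => //; exact: hU.
  have h2 : (n%:R : R) * expR 1 * n%:R <= expR 1 * 2 ^+ m.+1.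
    by rewrite mulrAC -expr2 mulrC; apply: ler_wpM2l.
  apply: le_trans h2; apply: ler_wpM2r => //; exact: ltW.
have F4 : (n%:R ^+ 3)^-1 * (0%:R + n%:R) <= (n%:R : R)^-1.
  rewrite add0r; have -> : (n%:R ^+ 3)^-1 * n%:R = ((n%:R : R) ^+ 2)^-1 by field.
  rewrite lef_pV2 ?posrE ?exprn_gt0 // expr2 -{1}(mul1r (n%:R)) ler_wpM2r // ?ler1n //.
  exact: (leq_trans _ hn).
have hmin : Num.min 1 (1 - ((Lm n m)%:R / (Lm n m).+1%:R) ^+ n +
       (Lm n m).+1%:R / (n%:R * 2 ^+ m.+1) * mu R n ^+ n * n%:R) <=
     1 - ((Lm n m)%:R / (Lm n m).+1%:R) ^+ n +
       (Lm n m).+1%:R / (n%:R * 2 ^+ m.+1) * mu R n ^+ n * n%:R.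
  by rewrite ge_min lexx orbT.
have HB := @ln_bound R n t hn htn.
have hB2 : ((4 * t.+1)%:R + expR 1 + 1) / n%:R <=
    (9 + expR 1) / ln 2 * ln (n%:R : R) / n%:R.
  by apply: ler_wpM2r => //; rewrite invr_ge0 ltW.
have hZ0 : 0 <= 1 - expR (-1) + (9 + expR 1) / ln 2 * ln (n%:R : R) / n%:R.
  apply: addr_ge0; first by rewrite subr_ge0 expR_le1 lerN10.
  apply: le_trans hB2; apply: divr_ge0; last exact: ltW.
  by rewrite addr_ge0 // addr_ge0 // ler0n.
have hobj : 1 <= 1 + (n%:R ^+ 2)^-1 - ((n%:R : R) ^+ 3)^-1.
  rewrite -addrA lerDl subr_ge0 lef_pV2 ?posrE ?exprn_gt0 //.
  by rewrite (exprS _ 2) -{1}(mul1r (_ ^+ 2)) ler_wpM2r ?exprn_ge0 ?ler1n // (leq_trans _ hn).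
have hZ : 1 - expR (-1) + (9 + expR 1) / ln 2 * ln (n%:R : R) / n%:R <=
   (1 - expR (-1) + (9 + expR 1) / ln 2 * ln (n%:R : R) / n%:R) *
   (1 + (n%:R ^+ 2)^-1 - (n%:R ^+ 3)^-1).
  by rewrite -{1}(mulr1 (1 - _ + _)); apply: ler_wpM2l.
apply: le_trans hZ.
move: F1 F2 F3 F4 hmin hB2.
rewrite /Lm /mu.
lra.
Qed.

Theorem mainTheorem10 (R : realType) (K : nat) (hK : (1 <= K)%N) :
  exists (N : nat) (C : R),
    forall n : nat, (2 <= n)%N -> (N <= n)%N ->
      lp_optimal (@inst_E n) (@inst_w R n) K (@inst_x R n) /\
      lp_obj (@inst_E n) (@inst_w R n) (@inst_x R n)
        = 1 + (n%:R ^+ 2)^-1 - (n%:R ^+ 3)^-1 /\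
      sampb_value (@inst_E n) (@inst_w R n) (@inst_x R n)
        <= (1 - expR (-1) + C * ln (n%:R) / n%:R)
           * lp_obj (@inst_E n) (@inst_w R n) (@inst_x R n).
Proof.
exists (32 + 2 * K)%N, ((9 + expR 1) / ln 2).
move=> n hn hNn.
have h2K : (2 * K <= n)%N by lia.
have h32 : (32 <= n)%N by lia.
split; [|split].
- split; first exact: (inst_x_feasible R n hn K h2K).
  move=> y hy; rewrite (obj_x R n hn); exact: (obj_le R n hn y K hy).
- exact: (obj_x R n hn).
- exact: (endgame R n hn h32).
Qed.
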